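(* Let $n,m$ be positive integers, $A_1,\dots,A_m\in\mathbb{S}_n$, $\mathcal{A}(X)=(\langle A_i,X\rangle)_{i=1}^m$, $\mathcal{A}^*(y)=\sum_i y_iA_i$, with $\mathcal{A}\mathcal{A}^*$ invertible; let $b\in\mathbb{R}^m$, $C\in\mathbb{S}_n$, $D:=\mathcal{A}^*((\mathcal{A}\mathcal{A}^* )^{-1}b)$ and $\mathcal{M}=\{S\in\mathbb{S}_n^+:\operatorname{diag}(S)=\mathbf{1}\}$. Fix $\sigma_k>0$, $y^k\in\mathbb{R}^m$, $\widetilde{X}^k\in\mathbb{S}_n$ and let $$\Phi_k(S)=\langle D,S+C\rangle-\langle\widetilde{X}^k,\mathcal{A}^*(y^k)-S-C\rangle+\tfrac{\sigma_k}{2}\|\mathcal{A}^*(y^k)-S-C\|^2 .$$ Then $S\in\mathcal{M}$ is a minimizer of $\Phi_k$ over $\mathcal{M}$ if and only if $$X:=\nabla\Phi_k(S)-\operatorname{Diag}(\nabla\Phi_k(S)S)\succeq0\quad\text{and}\quad XS=0,$$ where $\nabla\Phi_k(S)=\widetilde{X}^k-\sigma_k(\mathcal{A}^*(y^k)-S-C)+D$.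
   Context: $\mathbb{S}_n$ ($\mathbb{S}_n^+$) denotes real symmetric (positive semidefinite) $n\times n$ matrices, $\langle A,B\rangle=\mathrm{Tr}(A^{\intercal}B)$, $\|\cdot\|$ the Frobenius norm. For a square matrix $M$, $\operatorname{diag}(M)$ is the vector of its diagonal entries and $\operatorname{Diag}(M)$ the diagonal matrix with the same diagonal as $M$; $\mathbf{1}$ is the all-ones vector. *)

(* Defs.v *)
From HB Require Import structures.
From mathcomp Require Import all_boot all_order all_algebra.
From mathcomp Require Import reals.
Set Implicit Arguments. Unset Strict Implicit. Unset Printing Implicit Defensive.
Import Order.TTheory GRing.Theory Num.Theory.
Local Open Scope ring_scope.

Section Defs.
Variable R : realType.

Definition symmx n (A : 'M[R]_n) : Prop := A^T = A.

Definition psdmx n (A : 'M[R]_n) : Prop :=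
  symmx A /\ forall v : 'cV[R]_n, 0 <= (v^T *m A *m v) ord0 ord0.

Definition frob n (A B : 'M[R]_n) : R := \tr (A^T *m B).

Definition frob_norm2 n (A : 'M[R]_n) : R := frob A A.

Definition Aop n m (As : 'I_m -> 'M[R]_n) (X : 'M[R]_n) : 'cV[R]_m :=
  \col_i frob (As i) X.

Definition Aadj n m (As : 'I_m -> 'M[R]_n) (y : 'cV[R]_m) : 'M[R]_n :=
  \sum_(i < m) y i ord0 *: As i.

Definition AAadj n m (As : 'I_m -> 'M[R]_n) : 'M[R]_m :=
  \matrix_(i < m, j < m) (Aop As (Aadj As (delta_mx j ord0))) i ord0.

Definition Dmat n m (As : 'I_m -> 'M[R]_n) (b : 'cV[R]_m) : 'M[R]_n :=
  Aadj As (invmx (AAadj As) *m b).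

Definition Diagmx n (M : 'M[R]_n) : 'M[R]_n :=
  \matrix_(i < n, j < n) (if i == j then M i i else 0).

Definition elliptope n (S : 'M[R]_n) : Prop :=
  psdmx S /\ forall i, S i i = 1.

Definition Phi n m (As : 'I_m -> 'M[R]_n) (b : 'cV[R]_m) (C : 'M[R]_n)
  (sigma : R) (y : 'cV[R]_m) (Xt : 'M[R]_n) (S : 'M[R]_n) : R :=
  frob (Dmat As b) (S + C) - frob Xt (Aadj As y - S - C)
  + sigma / 2 * frob_norm2 (Aadj As y - S - C).

Definition gradPhi n m (As : 'I_m -> 'M[R]_n) (b : 'cV[R]_m) (C : 'M[R]_n)
  (sigma : R) (y : 'cV[R]_m) (Xt : 'M[R]_n) (S : 'M[R]_n) : 'M[R]_n :=
  Xt - sigma *: (Aadj As y - S - C) + Dmat As b.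

End Defs.

(* Main.v *)
Require Import Defs.
From HB Require Import structures.
From mathcomp Require Import all_boot all_order all_algebra.
From mathcomp Require Import reals ring lra zify.
Import Order.TTheory GRing.Theory Num.Theory.
Local Open Scope ring_scope.
Set Implicit Arguments. Unset Strict Implicit. Unset Printing Implicit Defensive.

Section Aux.
Variable R : realType.
Variable n : nat.
Implicit Types (A B : 'M[R]_n) (f g : 'I_n -> R).

Definition bf A f g : R := \sum_i \sum_j f i * A i j * g j.

Lemma sum_delta (F : 'I_n -> R) p : \sum_j (j == p)%:R * F j = F p.
Proof.
rewrite (bigD1 p) //= eqxx mul1r big1 ?addr0 // => i /negPf->; by rewrite mul0r.
Qed.

Lemma frobE A B : frob A B = \sum_i \sum_j A i j * B i j.
Proof.
rewrite /frob /mxtrace exchange_big; apply: eq_bigr => i _.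
rewrite mxE; apply: eq_bigr => j _; by rewrite mxE.
Qed.

Lemma mxqfE A (v : 'cV[R]_n) :
  (v^T *m A *m v) ord0 ord0 = bf A (fun i => v i ord0) (fun i => v i ord0).
Proof.
rewrite /bf mxE exchange_big; apply: eq_bigr => j _.
rewrite mxE mulr_suml; apply: eq_bigr => i _; by rewrite !mxE.
Qed.

Lemma psd_qf A : psdmx A -> forall f, 0 <= bf A f f.
Proof.
case=> _ H f; have := H (\col_i f i); rewrite mxqfE.
suff -> : bf A (fun i => (\col_i f i) i ord0) (fun i => (\col_i f i) i ord0) = bf A f f by [].
by rewrite /bf; apply: eq_bigr => i _; apply: eq_bigr => j _; rewrite !mxE.
Qed.

Lemma qf_psd A : symmx A -> (forall f, 0 <= bf A f f) -> psdmx A.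
Proof. by move=> hs H; split=> // v; rewrite mxqfE. Qed.

Lemma symE A : symmx A -> forall i j, A i j = A j i.
Proof. by move=> h i j; rewrite -{1}h mxE. Qed.

Lemma bf_shift A f p t : symmx A ->
  bf A (fun i => f i + t * (i == p)%:R) (fun i => f i + t * (i == p)%:R)
  = bf A f f + 2 * t * (\sum_i f i * A i p) + t ^+ 2 * A p p.
Proof.
move=> hs; rewrite /bf.
have -> : \sum_i \sum_j (f i + t * (i == p)%:R) * A i j * (f j + t * (j == p)%:R)
  = \sum_i \sum_j (f i * A i j * f j) + \sum_i \sum_j (j == p)%:R * (t * f i * A i j)
    + \sum_i (i == p)%:R * (\sum_j t * A i j * f j)
    + \sum_i (i == p)%:R * (\sum_j (j == p)%:R * (t ^+ 2 * A i j)).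
  rewrite -!big_split /=; apply: eq_bigr => i _.
  rewrite !mulr_sumr -!big_split /=; apply: eq_bigr => j _; ring.
rewrite sum_delta.
under [X in _ + X + _ + _]eq_bigr do rewrite sum_delta.
under [X in _ + _ + X]eq_bigr do rewrite sum_delta.
rewrite sum_delta.
have -> : \sum_j t * A p j * f j = t * \sum_i f i * A i p.
  rewrite mulr_sumr; apply: eq_bigr => j _; rewrite (symE hs); ring.
have -> : \sum_i t * f i * A i p = t * \sum_i f i * A i p.
  by rewrite mulr_sumr; apply: eq_bigr => i _; rewrite mulrA.
ring.
Qed.

Lemma bf_delta A p : bf A (fun i => (i == p)%:R) (fun i => (i == p)%:R) = A p p.
Proof.
rewrite /bf (eq_bigr (fun i => (i == p)%:R * \sum_j (j == p)%:R * A i j)).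
  by rewrite sum_delta sum_delta.
move=> i _; rewrite mulr_sumr; apply: eq_bigr => j _; ring.
Qed.


Lemma psd_diag_ge0 A p : psdmx A -> 0 <= A p p.
Proof. by move=> h; rewrite -bf_delta; apply: psd_qf. Qed.

Lemma psd_zero_diag A p : psdmx A -> A p p = 0 -> forall j, A p j = 0.
Proof.
move=> hA h0 j; have hs := hA.1.
have H : forall t, 0 <= A j j + 2 * t * A j p.
  move=> t; have := psd_qf hA (fun i => (i == j)%:R + t * (i == p)%:R).
  rewrite bf_shift // bf_delta h0 expr2 !mulr0 addr0.
  by rewrite sum_delta.
rewrite (symE hs); apply/eqP; apply/negPn/negP => hne.
have := H (- (A j j + 1) / (2 * A j p)).
have -> : 2 * (- (A j j + 1) / (2 * A j p)) * A j p = - (A j j + 1).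
  by field.
clear H; lra.
Qed.

Lemma sum0_mx (F : 'I_n -> 'I_n -> R) :
  (forall i j, F i j = 0) -> \sum_i \sum_j F i j = 0.
Proof. by move=> h; rewrite big1 // => i _; rewrite big1. Qed.

Lemma frob_psd_aux A : psdmx A -> forall k B, psdmx B ->
  (forall i j : 'I_n, (i < n - k)%N -> B i j = 0) ->
  0 <= \sum_i \sum_j A i j * B i j.
Proof.
move=> hA; elim=> [|k IH] B hB hz.
  by rewrite sum0_mx // => i j; rewrite hz ?mulr0 // subn0 ltn_ord.
have hsB := hB.1.
case: (leqP n k) => hk.
  apply: IH => // i j; have -> : (n - k = 0)%N by apply/eqP; rewrite subn_eq0.
  by [].
have hp : (n - k.+1 < n)%N by rewrite ltn_subrL; apply/andP; split=> //; apply: leq_ltn_trans hk.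
pose p := Ordinal hp.
have hzp : forall i j : 'I_n, (i < n - k)%N -> i != p -> B i j = 0.
  move=> i j hi hip; apply: hz; move: hip; rewrite -val_eqE /= => hip.
  move: hi hip; rewrite /=; set m := val i; lia.
have hc := psd_diag_ge0 p hB.
case: (eqVneq (B p p) 0) => hc0.
  apply: IH => // i j hi; case: (eqVneq i p) => [->|hip].
    exact: psd_zero_diag.
  by apply: hzp.
have cpos : 0 < B p p by rewrite lt0r hc0.
pose c := B p p.
pose B' := \matrix_(i, j) (B i j - B i p * B j p / c).
have hsBq : symmx B'.
  by apply/matrixP => i j; rewrite !mxE (symE hsB i j) [B j p * _]mulrC.
have hBq : psdmx B'.
  apply: (qf_psd hsBq) => f.
  pose s := \sum_i f i * B i p.
  have e1 : bf B' f f = bf B f f - s * s / c.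
    have -> : s * s / c = \sum_i \sum_j f i * (B i p * B j p / c) * f j.
      rewrite /s mulr_suml mulr_suml; apply: eq_bigr => i _.
      rewrite mulr_sumr mulr_suml; apply: eq_bigr => j _; ring.
    rewrite /bf -sumrB; apply: eq_bigr => i _.
    rewrite -sumrB; apply: eq_bigr => j _.
    rewrite !mxE; ring.
  have := psd_qf hB (fun i => f i + (- (s / c)) * (i == p)%:R).
  rewrite bf_shift // -/s -/c e1.
  have -> : bf B f f + 2 * - (s / c) * s + (- (s / c)) ^+ 2 * c = bf B f f - s * s / c.
    by field; rewrite gt_eqF.
  by [].
have -> : \sum_i \sum_j A i j * B i j = \sum_i \sum_j A i j * B' i j
    + bf A (fun i => B i p) (fun i => B i p) / c.
  rewrite /bf mulr_suml -big_split; apply: eq_bigr => i _.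
  rewrite mulr_suml -big_split; apply: eq_bigr => j _.
  rewrite !mxE (symE hsB j p); rewrite /=; ring.
apply: addr_ge0; last by apply: divr_ge0 => //; apply: psd_qf.
apply: IH => // i j hi; rewrite mxE.
case: (eqVneq i p) => [->|hip].
  by rewrite -/c (symE hsB j p) mulrC mulrA mulVf ?gt_eqF // mul1r subrr.
have hi' : (i < n - k)%N by apply: leq_trans hi _; rewrite leq_sub2l.
by rewrite (hzp i j) // (hzp i p) // !mul0r subr0.
Qed.

Lemma frob_psd A B : psdmx A -> psdmx B -> 0 <= \sum_i \sum_j A i j * B i j.
Proof.
move=> hA hB; apply: (frob_psd_aux hA (k := n)) => // i j.
by rewrite subnn ltn0.
Qed.


Lemma lim0 (a c t0 : R) : 0 < t0 -> (forall t, 0 < t -> t <= t0 -> 0 <= a + t * c) -> 0 <= a.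
Proof.
move=> ht0 H; rewrite leNgt; apply/negP => ha.
pose D := - a + 2 * t0 * `|c|.
have hc : 0 <= `|c| by [].
have hD : 0 < D by rewrite /D; nra.
pose t := t0 * (- a) / D.
have ht : 0 < t by rewrite /t divr_gt0 // mulr_gt0 // oppr_gt0.
have htD : t * D = t0 * (- a) by rewrite /t mulrVK ?unitfE ?gt_eqF.
have ht1 : t <= t0.
  have : t * D <= t0 * D by rewrite htD /D; nra.
  by rewrite ler_pM2r.
have := H t ht ht1.
have hcc : t * c <= t * `|c| by rewrite ler_pM2l // ler_norm.
have e : 2 * (t * `|c|) * D = 2 * t0 * (- a) * `|c|.
  have -> : 2 * t0 * (- a) * `|c| = 2 * (t0 * - a) * `|c| by ring.
  rewrite -htD; ring.
have h2 : 2 * (t * `|c|) <= - a.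
  have : 2 * (t * `|c|) * D <= (- a) * D by rewrite e /D; nra.
  by rewrite ler_pM2r.
lra.
Qed.

Lemma symmxP A : symmx A <-> forall i j, A i j = A j i.
Proof.
split; first exact: symE.
by move=> h; apply/matrixP => i j; rewrite mxE h.
Qed.

Lemma if0 (b : bool) (x : R) : (if b then x else 0) = b%:R * x.
Proof. by case: b; rewrite ?mul1r ?mul0r. Qed.

Lemma sq_le_sum f i : f i ^+ 2 <= \sum_k f k ^+ 2.
Proof.
rewrite (bigD1 i) //= lerDl; apply: sumr_ge0 => k _; exact: sqr_ge0.
Qed.


Lemma DiagE (M : 'M[R]_n) i j : Diagmx M i j = (j == i)%:R * M i i.
Proof. by rewrite /Diagmx mxE if0 eq_sym. Qed.

Lemma frob_shift (G S E : 'M[R]_n) : symmx S -> (forall i, S i i = 1) -> (forall i, E i i = 1) ->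
  frob G (E - S) = frob (G - Diagmx (G *m S)) E.
Proof.
move=> hS hSd hEd; rewrite !frobE.
have -> : \sum_i \sum_j (G - Diagmx (G *m S)) i j * E i j
   = \sum_i \sum_j G i j * E i j - \sum_i \sum_j (j == i)%:R * ((G *m S) i i * E i j).
  rewrite -sumrB; apply: eq_bigr => i _; rewrite -sumrB; apply: eq_bigr => j _.
  rewrite !mxE if0 eq_sym; ring.
have -> : \sum_i \sum_j (j == i)%:R * ((G *m S) i i * E i j) = \sum_i \sum_j G i j * S i j.
  apply: eq_bigr => i _; rewrite sum_delta hEd mulr1 mxE.
  by apply: eq_bigr => j _; rewrite (symE hS j i).
rewrite -sumrB; apply: eq_bigr => i _; rewrite -sumrB; apply: eq_bigr => j _.
rewrite !mxE; ring.
Qed.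


Lemma phi_ring (d1 d2 d3 d4 d5 d6 sigma : R) :
  d1 * (d2 + d3 + d4) - d5 * (d6 - (d2 + d3) - d4) +
  sigma / 2 * ((d6 - (d2 + d3) - d4) * (d6 - (d2 + d3) - d4)) -
  (d1 * (d2 + d4) - d5 * (d6 - d2 - d4) +
   sigma / 2 * ((d6 - d2 - d4) * (d6 - d2 - d4))) =
  (d5 - sigma * (d6 - d2 - d4) + d1) * d3 + sigma / 2 * (d3 * d3).
Proof. by field. Qed.

Lemma Phi_diff m (As : 'I_m -> 'M[R]_n) b C sigma y Xt (S Dl : 'M[R]_n) :
  Phi As b C sigma y Xt (S + Dl) - Phi As b C sigma y Xt S
  = frob (gradPhi As b C sigma y Xt S) Dl + sigma / 2 * frob Dl Dl.
Proof.
rewrite /Phi /gradPhi /frob_norm2 !frobE !mulr_sumr.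
rewrite -!sumrB -!big_split /= -sumrB; apply: eq_bigr => i _.
rewrite !mulr_sumr -!sumrB -!big_split /= -sumrB; apply: eq_bigr => j _.
rewrite !mxE; exact: phi_ring.
Qed.


Lemma frobZr (A B : 'M[R]_n) t : frob A (t *: B) = t * frob A B.
Proof.
rewrite !frobE mulr_sumr; apply: eq_bigr => i _; rewrite mulr_sumr.
by apply: eq_bigr => j _; rewrite mxE; ring.
Qed.

Lemma frob_sq_ge0 (A : 'M[R]_n) : 0 <= frob A A.
Proof.
rewrite frobE; apply: sumr_ge0 => i _; apply: sumr_ge0 => j _.
by rewrite -expr2 sqr_ge0.
Qed.

Lemma congr_psd (M S : 'M[R]_n) : psdmx S -> psdmx (M *m S *m M^T).
Proof.
case=> hs hq; split.
  by rewrite /symmx !trmx_mul trmxK hs mulmxA.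
move=> v; have := hq (M^T *m v).
by rewrite trmx_mul trmxK !mulmxA.
Qed.

Lemma congrE (M S : 'M[R]_n) i j :
  (M *m S *m M^T) i j = bf S (fun k => M i k) (fun l => M j l).
Proof.
rewrite /bf mxE exchange_big; apply: eq_bigr => l _.
rewrite !mxE mulr_suml; apply: eq_bigr => k _; done.
Qed.

Lemma bf_scale (S : 'M[R]_n) f s : bf S (fun i => s * f i) (fun i => s * f i) = s ^+ 2 * bf S f f.
Proof.
rewrite /bf mulr_sumr; apply: eq_bigr => i _; rewrite mulr_sumr.
by apply: eq_bigr => j _; ring.
Qed.

Lemma bf_expand (S : 'M[R]_n) r i j (al be : R) :
  bf S (fun k => (k == i)%:R + al * r k) (fun l => (l == j)%:R + be * r l)
  = S i j + be * (\sum_l S i l * r l) + al * (\sum_k r k * S k j) + al * be * bf S r r.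
Proof.
rewrite /bf.
have -> : \sum_k \sum_l ((k == i)%:R + al * r k) * S k l * ((l == j)%:R + be * r l)
  = \sum_k (k == i)%:R * (\sum_l (l == j)%:R * S k l) + \sum_k (k == i)%:R * (\sum_l be * (S k l * r l))
    + \sum_k \sum_l (l == j)%:R * (al * (r k * S k l)) + \sum_k \sum_l al * be * (r k * S k l * r l).
  rewrite -!big_split /=; apply: eq_bigr => k _.
  rewrite !mulr_sumr -!big_split /=; apply: eq_bigr => l _; ring.
rewrite sum_delta sum_delta sum_delta -mulr_sumr.
congr (_ + _ + _ + _).
  by rewrite mulr_sumr; apply: eq_bigr => k _; rewrite sum_delta mulrA.
rewrite mulr_sumr; apply: eq_bigr => k _; rewrite mulr_sumr.
by apply: eq_bigr => l _; ring.
Qed.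


Lemma bf_ext (S : 'M[R]_n) f f' g g' : (forall k, f k = f' k) -> (forall k, g k = g' k) ->
  bf S f g = bf S f' g'.
Proof.
move=> hf hg; rewrite /bf; apply: eq_bigr => i _; apply: eq_bigr => j _.
by rewrite hf hg.
Qed.

Lemma trXS0 (S X : 'M[R]_n) : symmx S -> (forall a, (X *m S) a a = 0) ->
  \sum_i \sum_j X i j * S i j = 0.
Proof.
move=> hS hd; rewrite big1 // => i _; rewrite -[RHS](hd i) mxE.
by apply: eq_bigr => j _; rewrite (symE hS i j).
Qed.

Lemma N1_key (S X : 'M[R]_n) a u c s :
  psdmx S -> (forall i, S i i = 1) -> symmx X ->
  (forall a, (X *m S) a a = 0) ->
  (forall E, elliptope E -> 0 <= frob X E) ->
  \sum_k S a k * u k = 0 -> c ^+ 2 + s ^+ 2 * bf S u u = 1 ->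
  0 <= 2 * s * (\sum_j X a j * (\sum_l S j l * u l)) + 2 * (1 - c) * X a a.
Proof.
move=> hS hSd hX hXS hmin hu hcs.
have hSs := hS.1.
pose r k := s * u k + (c - 1) * (k == a)%:R.
pose Sr i := \sum_l S i l * r l.
pose rho := bf S r r.
pose M := \matrix_(i, k) ((k == i)%:R + (i == a)%:R * r k).
have hE : forall i j, (M *m S *m M^T) i j
    = S i j + (j == a)%:R * Sr i + (i == a)%:R * Sr j + (i == a)%:R * (j == a)%:R * rho.
  move=> i j; rewrite congrE.
  rewrite (@bf_ext S _ (fun k => (k == i)%:R + (i == a)%:R * r k)
                  _ (fun k => (k == j)%:R + (j == a)%:R * r k)); last first.
  - by move=> k; rewrite mxE.
  - by move=> k; rewrite mxE.
  rewrite bf_expand; congr (_ + _ + _ + _); congr (_ * _).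
  by apply: eq_bigr => k _; rewrite (symE hSs k j) mulrC.
have hSrj : forall j, Sr j = s * (\sum_l S j l * u l) + (c - 1) * S j a.
  move=> j; rewrite /Sr /r.
  have -> : \sum_l S j l * (s * u l + (c - 1) * (l == a)%:R)
     = s * (\sum_l S j l * u l) + (c - 1) * \sum_l (l == a)%:R * S j l.
    rewrite !mulr_sumr -big_split /=; apply: eq_bigr => l _; ring.
  by rewrite sum_delta.
have hSra : Sr a = c - 1 by rewrite hSrj hu hSd; ring.
have hrho : rho = s ^+ 2 * bf S u u + (c - 1) ^+ 2.
  rewrite /rho /r bf_shift // bf_scale hSd.
  have -> : \sum_i s * u i * S i a = s * \sum_k S a k * u k.
    by rewrite mulr_sumr; apply: eq_bigr => k _; rewrite (symE hSs k a); ring.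
  rewrite hu; ring.
have hEl : elliptope (M *m S *m M^T).
  split; first exact: congr_psd.
  move=> i; rewrite hE; case: (eqVneq i a) => [->|hia].
    rewrite hSra hrho hSd !mul1r.
    apply/eqP; rewrite -subr_eq0; apply/eqP.
    transitivity (c ^+ 2 + s ^+ 2 * bf S u u - 1); first ring.
    by rewrite hcs subrr.
  by rewrite !mul0r !addr0 hSd.
have := hmin _ hEl; rewrite frobE.
have -> : \sum_i \sum_j X i j * (M *m S *m M^T) i j
   = \sum_i \sum_j X i j * S i j + \sum_i \sum_j (j == a)%:R * (X i j * Sr i)
     + \sum_i (i == a)%:R * \sum_j X i j * Sr j
     + \sum_i (i == a)%:R * \sum_j (j == a)%:R * (X i j * rho).
  rewrite -!big_split /=; apply: eq_bigr => i _.
  rewrite !mulr_sumr -!big_split /=; apply: eq_bigr => j _; rewrite hE; ring.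
rewrite trXS0 // sum_delta sum_delta sum_delta.
under eq_bigr do rewrite sum_delta.
have hXSr : \sum_j X a j * Sr j = s * (\sum_j X a j * (\sum_l S j l * u l)).
  have -> : \sum_j X a j * Sr j = s * (\sum_j X a j * (\sum_l S j l * u l))
       + (c - 1) * \sum_j X a j * S j a.
    rewrite !mulr_sumr -big_split /=; apply: eq_bigr => j _.
    rewrite hSrj; ring.
  by have := hXS a; rewrite mxE => ->; rewrite mulr0 addr0.
have -> : \sum_i X i a * Sr i = \sum_j X a j * Sr j.
  by apply: eq_bigr => i _; rewrite (symE hX i a).
rewrite hXSr hrho.
have -> : s ^+ 2 * bf S u u = 1 - c ^+ 2 by rewrite -hcs; ring.
move=> h; apply: le_trans h _; rewrite le_eqVlt; apply/orP; left; apply/eqP; ring.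
Qed.


Lemma N1 (S X : 'M[R]_n) :
  psdmx S -> (forall i, S i i = 1) -> symmx X ->
  (forall a, (X *m S) a a = 0) ->
  (forall E, elliptope E -> 0 <= frob X E) -> X *m S = 0.
Proof.
move=> hS hSd hX hXS hmin.
have hSs := hS.1.
have hQ : forall a u, \sum_k S a k * u k = 0 ->
    \sum_j X a j * (\sum_l S j l * u l) = 0.
  move=> a u hu.
  set Q := \sum_j X a j * _.
  set q := bf S u u.
  have hq : 0 <= q by apply: psd_qf.
  have H : forall tau, 0 <= tau * (Q + tau * (q * X a a)).
    move=> tau.
    pose D := 1 + tau ^+ 2 * q.
    have hD : 0 < D by rewrite /D; have := mulr_ge0 (sqr_ge0 tau) hq; lra.
    have hD0 : D != 0 by rewrite gt_eqF.
    have := @N1_key S X a u ((1 - tau ^+ 2 * q) / D) (2 * tau / D) hS hSd hX hXS hmin hu.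
    have -> : ((1 - tau ^+ 2 * q) / D) ^+ 2 + (2 * tau / D) ^+ 2 * bf S u u = 1.
      rewrite -/q; apply/eqP; rewrite -subr_eq0; apply/eqP.
      rewrite /D; field; rewrite -/D //.
    move=> /(_ erefl).
    have -> : 2 * (2 * tau / D) * Q + 2 * (1 - (1 - tau ^+ 2 * q) / D) * X a a
       = (4 / D) * (tau * (Q + tau * (q * X a a))).
      by rewrite /D; field; rewrite -/D.
    rewrite pmulr_rge0 //; apply: divr_gt0 => //; lra.
  have h1 : 0 <= Q.
    apply: (@lim0 Q (q * X a a) 1); first exact: ltr01.
    move=> t ht _; have := H t; rewrite pmulr_rge0 //.
  have h2 : 0 <= - Q.
    apply: (@lim0 (- Q) (q * X a a) 1); first exact: ltr01.
    move=> t ht _; have := H (- t).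
    have -> : - t * (Q + - t * (q * X a a)) = t * (- Q + t * (q * X a a)) by ring.
    by rewrite pmulr_rge0.
  lra.
apply/matrixP => a b; rewrite mxE.
pose u k := (k == b)%:R - S a b * (k == a)%:R.
have hu : \sum_k S a k * u k = 0.
  have -> : \sum_k S a k * u k = \sum_k (k == b)%:R * S a k - S a b * \sum_k (k == a)%:R * S a k.
    rewrite mulr_sumr -sumrB; apply: eq_bigr => k _; rewrite /u; ring.
  by rewrite !sum_delta hSd mulr1 subrr.
have := hQ a u hu.
have -> : \sum_j X a j * (\sum_l S j l * u l) = (X *m S) a b - S a b * (X *m S) a a.
  rewrite !mxE mulr_sumr -sumrB; apply: eq_bigr => j _.
  have -> : \sum_l S j l * u l = S j b - S a b * S j a.
    have -> : \sum_l S j l * u l = \sum_l (l == b)%:R * S j l - S a b * \sum_l (l == a)%:R * S j l.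
      rewrite mulr_sumr -sumrB; apply: eq_bigr => k _; rewrite /u; ring.
    by rewrite !sum_delta.
  ring.
by rewrite hXS mulr0 subr0 mxE => ->; rewrite mxE.
Qed.


Lemma abs_bound (a w W : R) : - W <= w -> w <= W -> a * w <= `|a| * W.
Proof.
move=> h1 h2; apply: le_trans (ler_norm _) _; rewrite normrM.
apply: ler_wpM2l => //; rewrite ler_norml; apply/andP; split => //.
Qed.

Lemma N2 (S X : 'M[R]_n) :
  psdmx S -> (forall i, S i i = 1) -> symmx X -> X *m S = 0 ->
  (forall E, elliptope E -> 0 <= frob X E) -> psdmx X.
Proof.
move=> hS hSd hX hXS hmin.
have hSs := hS.1.
apply: (qf_psd hX) => x.
pose Nx := 1 + \sum_k x k ^+ 2.
have hN : 0 < Nx.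
  rewrite /Nx; have : 0 <= \sum_k x k ^+ 2 by apply: sumr_ge0 => k _; exact: sqr_ge0.
  lra.
pose s0 := (6 * Nx)^-1.
have hs0 : 0 < s0 by rewrite /s0 invr_gt0; lra.
pose H i j := X i j * S i j.
have hrow : forall i, \sum_j H i j = 0.
  move=> i; transitivity ((X *m S) i i); last by rewrite hXS mxE.
  rewrite mxE.
  by apply: eq_bigr => j _; rewrite /H (symE hSs i j).
have hcol : forall j, \sum_i H i j = 0.
  move=> j; transitivity ((X *m S) j j); last by rewrite hXS mxE.
  rewrite mxE.
  by apply: eq_bigr => i _; rewrite /H (symE hX i j).
pose K := \sum_i \sum_j `|H i j| * (8 * (x i ^+ 2 - x j ^+ 2) ^+ 2)
          + \sum_i `|X i i| * (4 * x i ^+ 4).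
apply: (@lim0 (bf X x x) (K / 4) s0) => // s hs hss0.
pose y i := 2 * s * x i ^+ 2.
pose m i := 1 - y i - y i ^+ 2.
pose d i := 1 - m i ^+ 2 - 2 * y i.
have hy : forall i, 0 <= y i /\ y i <= 1 / 3.
  move=> i; have hxi := sq_le_sum x i.
  have hx0 := sqr_ge0 (x i).
  have h6 : 6 * Nx * s <= 1.
    by move: hss0; rewrite /s0 -(ler_pM2l (_ : 0 < 6 * Nx)) ?mulrV ?unitfE ?gt_eqF //; lra.
  split; rewrite /y; first by apply: mulr_ge0 => //; lra.
  rewrite /Nx in h6; nra.
have hd : forall i, 0 <= d i /\ d i <= y i ^+ 2.
  move=> i; have [h1 h2] := hy i.
  have -> : d i = y i ^+ 2 * (1 - 2 * y i - y i ^+ 2) by rewrite /d /m; ring.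
  split; first by apply: mulr_ge0; [exact: sqr_ge0 | nra].
  have : 0 <= y i ^+ 2 * (2 * y i + y i ^+ 2) by apply: mulr_ge0; [exact: sqr_ge0 | nra].
  lra.
pose E := \matrix_(i, j) (m i * S i j * m j + 4 * s * (x i * x j) + (i == j)%:R * d i).
have hEs : symmx E.
  apply/symmxP => i j; rewrite !mxE (symE hSs i j) [(j == i)]eq_sym.
  case: (eqVneq i j) => [->|_] //; rewrite /= !mul0r; ring.
have hEl : elliptope E.
  split; last first.
    by move=> i; rewrite mxE eqxx mul1r hSd /d /y; ring.
  apply: (qf_psd hEs) => f.
  have -> : bf E f f = bf S (fun i => m i * f i) (fun i => m i * f i)
      + 4 * s * (\sum_i \sum_j (f i * x i) * (f j * x j))
      + \sum_i \sum_j (j == i)%:R * (d i * f i * f j).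
    rewrite /bf mulr_sumr -!big_split /=; apply: eq_bigr => i _.
    rewrite mulr_sumr -!big_split /=; apply: eq_bigr => j _.
    by rewrite !mxE [(i == j)]eq_sym; ring.
  under [X in _ + X]eq_bigr do rewrite sum_delta.
  have -> : \sum_i \sum_j (f i * x i) * (f j * x j) = (\sum_i f i * x i) ^+ 2.
    by rewrite expr2 mulr_suml; apply: eq_bigr => i _; rewrite mulr_sumr.
  apply: addr_ge0; first apply: addr_ge0.
  - exact: psd_qf.
  - by apply: mulr_ge0; [apply: mulr_ge0 => //; lra | exact: sqr_ge0].
  - apply: sumr_ge0 => i _; rewrite -mulrA; apply: mulr_ge0; first by case: (hd i).
    by rewrite -expr2 sqr_ge0.
have hF := hmin E hEl; rewrite frobE in hF.
have dec : \sum_i \sum_j X i j * E i j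
    = \sum_i \sum_j H i j * (m i * m j) + 4 * s * bf X x x + \sum_i X i i * d i.
  have -> : \sum_i \sum_j X i j * E i j
     = \sum_i \sum_j H i j * (m i * m j) + 4 * s * bf X x x
       + \sum_i \sum_j (j == i)%:R * (X i j * d i).
    rewrite /bf mulr_sumr -!big_split /=; apply: eq_bigr => i _.
    rewrite mulr_sumr -!big_split /=; apply: eq_bigr => j _.
    by rewrite !mxE [(i == j)]eq_sym /H; ring.
  by under [X in _ + X]eq_bigr do rewrite sum_delta.
have T1 : \sum_i \sum_j H i j * (m i * m j)
    = \sum_i \sum_j H i j * (m i * m j - m i ^+ 2 / 2 - m j ^+ 2 / 2).
  have -> : \sum_i \sum_j H i j * (m i * m j - m i ^+ 2 / 2 - m j ^+ 2 / 2)
     = \sum_i \sum_j H i j * (m i * m j) - \sum_i (m i ^+ 2 / 2) * (\sum_j H i j)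
       - \sum_j (m j ^+ 2 / 2) * (\sum_i H i j).
    have e3 : \sum_j (m j ^+ 2 / 2) * (\sum_i H i j) = \sum_i \sum_j H i j * (m j ^+ 2 / 2).
      rewrite [RHS]exchange_big; apply: eq_bigr => j _; rewrite mulr_sumr.
      by apply: eq_bigr => i _; rewrite mulrC.
    rewrite e3 -!sumrB; apply: eq_bigr => i _.
    rewrite !mulr_sumr -!sumrB; apply: eq_bigr => j _; by field.
  have z1 : \sum_i (m i ^+ 2 / 2) * (\sum_j H i j) = 0.
    by rewrite big1 // => i _; rewrite hrow mulr0.
  have z2 : \sum_j (m j ^+ 2 / 2) * (\sum_i H i j) = 0.
    by rewrite big1 // => j _; rewrite hcol mulr0.
  by rewrite z1 z2 !subr0.
pose K1 := \sum_i \sum_j `|H i j| * (8 * (x i ^+ 2 - x j ^+ 2) ^+ 2).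
pose K3 := \sum_i `|X i i| * (4 * x i ^+ 4).
have B1 : \sum_i \sum_j H i j * (m i * m j - m i ^+ 2 / 2 - m j ^+ 2 / 2) <= s ^+ 2 * K1.
  rewrite /K1 mulr_sumr; apply: ler_sum => i _; rewrite mulr_sumr; apply: ler_sum => j _.
  have -> : s ^+ 2 * (`|H i j| * (8 * (x i ^+ 2 - x j ^+ 2) ^+ 2))
     = `|H i j| * (8 * s ^+ 2 * (x i ^+ 2 - x j ^+ 2) ^+ 2) by ring.
  have e1 : m i * m j - m i ^+ 2 / 2 - m j ^+ 2 / 2 = - ((m i - m j) ^+ 2 / 2) by field.
  have e2 : (m i - m j) ^+ 2 = (4 * s ^+ 2 * (x i ^+ 2 - x j ^+ 2) ^+ 2) * (1 + y i + y j) ^+ 2.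
    by rewrite /m /y; ring.
  have hW : 0 <= 8 * s ^+ 2 * (x i ^+ 2 - x j ^+ 2) ^+ 2.
    by apply: mulr_ge0; [apply: mulr_ge0; [lra | exact: sqr_ge0] | exact: sqr_ge0].
  have h4 : (1 + y i + y j) ^+ 2 <= 4.
    by have [? ?] := hy i; have [? ?] := hy j; nra.
  have hm : (m i - m j) ^+ 2 <= 2 * (8 * s ^+ 2 * (x i ^+ 2 - x j ^+ 2) ^+ 2).
    rewrite e2; have hp : 0 <= 4 * s ^+ 2 * (x i ^+ 2 - x j ^+ 2) ^+ 2.
      by apply: mulr_ge0; [apply: mulr_ge0; [lra | exact: sqr_ge0] | exact: sqr_ge0].
    have := ler_wpM2l hp h4; move=> h; apply: le_trans h _.
    rewrite le_eqVlt; apply/orP; left; apply/eqP; ring.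
  apply: abs_bound; rewrite e1.
    have : 0 <= (m i - m j) ^+ 2 by exact: sqr_ge0.
    lra.
  have : 0 <= (m i - m j) ^+ 2 by exact: sqr_ge0.
  lra.
have B3 : \sum_i X i i * d i <= s ^+ 2 * K3.
  rewrite /K3 mulr_sumr; apply: ler_sum => i _.
  have -> : s ^+ 2 * (`|X i i| * (4 * x i ^+ 4)) = `|X i i| * (y i ^+ 2) by rewrite /y; ring.
  have [h1 h2] := hd i; apply: abs_bound => //.
  have := sqr_ge0 (y i); lra.
have hK : K = K1 + K3 by [].
rewrite dec T1 in hF.
have : 0 <= 4 * s * (bf X x x + s * (K / 4)).
  rewrite hK; have : 4 * s * (bf X x x + s * ((K1 + K3) / 4))
     = 4 * s * bf X x x + s ^+ 2 * K1 + s ^+ 2 * K3 by field.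
  move=> ->; lra.
by rewrite pmulr_rge0 //; lra.
Qed.



Lemma frobZl (A B : 'M[R]_n) t : frob (t *: A) B = t * frob A B.
Proof.
rewrite !frobE mulr_sumr; apply: eq_bigr => i _; rewrite mulr_sumr.
by apply: eq_bigr => j _; rewrite mxE; ring.
Qed.

Lemma elliptope_comb (S E : 'M[R]_n) t : 0 <= t -> t <= 1 ->
  elliptope S -> elliptope E -> elliptope (S + t *: (E - S)).
Proof.
move=> ht0 ht1 [[hSs hSq] hSd] [[hEs hEq] hEd].
have hs : symmx (S + t *: (E - S)).
  apply/symmxP => i j; rewrite !mxE (symE hSs i j) (symE hEs i j) //.
split; last by move=> i; rewrite !mxE hSd hEd subrr mulr0 addr0.
apply: (qf_psd hs) => f.
have -> : bf (S + t *: (E - S)) f f = (1 - t) * bf S f f + t * bf E f f.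
  rewrite /bf !mulr_sumr -big_split /=; apply: eq_bigr => i _.
  rewrite !mulr_sumr -big_split /=; apply: eq_bigr => j _.
  rewrite !mxE; ring.
have := psd_qf (conj hSs hSq) f; have := psd_qf (conj hEs hEq) f.
move=> h1 h2; apply: addr_ge0; apply: mulr_ge0 => //; lra.
Qed.

Lemma N0 m (As : 'I_m -> 'M[R]_n) b C sigma y Xt (S : 'M[R]_n) :
  0 < sigma -> elliptope S ->
  (forall S', elliptope S' -> Phi As b C sigma y Xt S <= Phi As b C sigma y Xt S') ->
  forall E, elliptope E -> 0 <= frob (gradPhi As b C sigma y Xt S) (E - S).
Proof.
move=> hsig hS hmin E hE.
apply: (@lim0 _ (sigma / 2 * frob (E - S) (E - S)) 1); first exact: ltr01.
move=> t ht ht1.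
have := hmin _ (elliptope_comb (ltW ht) ht1 hS hE).
rewrite -subr_ge0 Phi_diff frobZr frobZl frobZr.
have -> : t * frob (gradPhi As b C sigma y Xt S) (E - S) +
   sigma / 2 * (t * (t * frob (E - S) (E - S)))
   = t * (frob (gradPhi As b C sigma y Xt S) (E - S) + t * (sigma / 2 * frob (E - S) (E - S))).
  by field.
by rewrite pmulr_rge0.
Qed.

Lemma mxsubE (A B : 'M[R]_n) i j : (A - B) i j = A i j - B i j.
Proof. by rewrite !mxE. Qed.

Lemma Aadj_sym m (As : 'I_m -> 'M[R]_n) y : (forall i, symmx (As i)) -> symmx (Aadj As y).
Proof.
move=> h; apply/symmxP => i j; rewrite /Aadj !summxE; apply: eq_bigr => k _.
by rewrite !mxE (symE (h k) i j).
Qed.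

End Aux.

Unset Implicit Arguments.

Theorem lemma3p2 (R : realType) (n m : nat) (hn : (0 < n)%N) (hm : (0 < m)%N)
  (As : 'I_m -> 'M[R]_n) (hAs : forall i, symmx (As i))
  (hinv : AAadj As \in unitmx)
  (b : 'cV[R]_m) (C : 'M[R]_n) (hC : symmx C)
  (sigma : R) (hsigma : 0 < sigma) (y : 'cV[R]_m)
  (Xt : 'M[R]_n) (hXt : symmx Xt)
  (S : 'M[R]_n) (hS : elliptope S) :
  (forall S' : 'M[R]_n, elliptope S' ->
     Phi As b C sigma y Xt S <= Phi As b C sigma y Xt S')
  <->
  (let G := gradPhi As b C sigma y Xt S in
   let X := G - Diagmx (G *m S) in
   psdmx X /\ X *m S = 0).
Proof.
have hSs := hS.1.1; have hSd := hS.2.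
set G := gradPhi As b C sigma y Xt S.
have hGs : symmx G.
  have h1 := Aadj_sym y hAs.
  have h2 : symmx (Dmat As b) by apply: Aadj_sym.
  apply/symmxP => i j; rewrite /G /gradPhi !mxE (symE hXt i j) (symE h1 i j)
    (symE hSs i j) (symE hC i j) (symE h2 i j) //.
set X := G - Diagmx (G *m S).
have hXs : symmx X.
  apply/symmxP => i j; rewrite /X !mxsubE !DiagE (symE hGs i j).
  by case: (eqVneq i j) => [->|hij] //; rewrite !mul0r.
have hXSd : forall a, (X *m S) a a = 0.
  move=> a; rewrite mxE.
  have -> : \sum_j X a j * S j a = \sum_j G a j * S j a - \sum_j (j == a)%:R * ((G *m S) a a * S j a).
    rewrite -sumrB; apply: eq_bigr => j _; rewrite /X mxsubE DiagE; ring.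
  by rewrite sum_delta hSd mulr1 mxE subrr.
have hshift : forall E, elliptope E -> frob G (E - S) = frob X E.
  by move=> E hE; apply: frob_shift => //; exact: hE.2.
split.
  move=> hmin.
  have h0 : forall E, elliptope E -> 0 <= frob X E.
    by move=> E hE; rewrite -hshift //; apply: N0.
  have hXS := N1 hS.1 hSd hXs hXSd h0.
  by split => //; apply: (N2 hS.1 hSd hXs hXS h0).
move=> [hXp hXS] S' hS'.
rewrite -subr_ge0.
have -> : S' = S + (S' - S) by rewrite addrC subrK.
rewrite Phi_diff -/G hshift //.
apply: addr_ge0; first by rewrite frobE; apply: frob_psd => //; exact: hS'.1.
apply: mulr_ge0; last exact: frob_sq_ge0.
apply: divr_ge0; [exact: ltW | by []].
Qed.
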